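(* Let $k\ge1$ and let $G\in\mathfrak A$ contain no subgraph isomorphic to $\Gamma_{k+1}$. If $H$ is a subgraph of $G$ isomorphic to $\Gamma_k$, then every vertex $q\in V(G)$ is an $H$-twin of some vertex of $H$.
   Context: $\mathfrak A$ is the class of maximal triangle-free graphs with at least two vertices containing no induced cycle of length six. (Maximal triangle-free: no triangle, and adding any new edge creates a triangle.) Andrásfai graph $\Gamma_k$: vertex set $\mathbb Z/(3k-1)\mathbb Z$, $ij$ an edge iff $i-j\in\{k,\dots,2k-1\}$ mod $3k-1$. For a subgraph $H$ of $G$, $q\in V(H)$, $q'\in V(G)$, $q'$ is an $H$-twin of $q$ if $\mathrm N(q)\cap V(H)=\mathrm N(q')\cap V(H)$ (neighbourhoods in $G$). *)

(* Defs.v *)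
From mathcomp Require Import all_boot.
Set Implicit Arguments. Unset Strict Implicit. Unset Printing Implicit Defensive.

Definition simple_graph (T : finType) (e : rel T) : Prop :=
  symmetric e /\ irreflexive e.

Definition triangle_free (T : finType) (e : rel T) : Prop :=
  forall x y z : T, ~ [&& e x y, e y z & e z x].

(* Maximal triangle-free: triangle-free and adding any non-edge xy (x <> y)
   creates a triangle, i.e. x and y have a common neighbour. *)
Definition maximal_triangle_free (T : finType) (e : rel T) : Prop :=
  triangle_free e /\
  forall x y : T, x != y -> ~~ e x y -> exists z, e x z && e z y.

Definition c6_adj (a b : 'I_6) : bool :=
  ((a + 1) %% 6 == b) || ((b + 1) %% 6 == a).

Definition has_induced_C6 (T : finType) (e : rel T) : Prop :=
  exists c : 'I_6 -> T, injective c /\ forall a b, e (c a) (c b) = c6_adj a b.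

Definition classA (T : finType) (e : rel T) : Prop :=
  [/\ simple_graph e, 2 <= #|T|, maximal_triangle_free e & ~ has_induced_C6 e].

Definition andrasfai_adj (k : nat) (i j : 'I_(3 * k - 1)) : bool :=
  let d := (i + (3 * k - 1) - j) %% (3 * k - 1) in (k <= d) && (d <= 2 * k - 1).

Definition andrasfai_embedding (k : nat) (T : finType) (e : rel T)
    (f : 'I_(3 * k - 1) -> T) : Prop :=
  injective f /\ forall i j : 'I_(3 * k - 1), @andrasfai_adj k i j -> e (f i) (f j).

Arguments andrasfai_embedding k {T} e f.

Definition has_andrasfai_subgraph (k : nat) (T : finType) (e : rel T) : Prop :=
  exists f : 'I_(3 * k - 1) -> T, andrasfai_embedding k e f.

Definition H_twin (T : finType) (e : rel T) (VH : {set T}) (q q' : T) : Prop :=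
  forall v, v \in VH -> e q v = e q' v.

(* Main.v *)
Require Import Defs.
From mathcomp Require Import all_boot zify.
Set Implicit Arguments. Unset Strict Implicit. Unset Printing Implicit Defensive.

Lemma c6_inj (a b : 'I_6) : (forall w, c6_adj a w = c6_adj b w) -> a = b.
Proof.
move=> H; apply/val_inj.
have := H (inord 0); have := H (inord 1); have := H (inord 2);
have := H (inord 3); have := H (inord 4); have := H (inord 5).
rewrite /c6_adj !inordK //.
case: a b {H} => [[|[|[|[|[|[|//]]]]]] ?] [[|[|[|[|[|[|//]]]]]] ?]; vm_compute; congruence.
Qed.

Lemma modsub_lem (n u t : nat) : 0 < n -> t < n ->
  ((u + t) %% n + n - u %% n) %% n = t.
Proof.
move=> n0 tn.
have r_lt : u %% n < n by rewrite ltn_mod.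
rewrite -modnDml.
move: r_lt; generalize (u %% n) => r r_lt.
case: (ltnP (r + t) n) => H.
  rewrite (modn_small H).
  have -> : r + t + n - r = t + n by lia.
  by rewrite modnDr modn_small.
have -> : (r + t) = (r + t - n) + n by lia.
rewrite modnDr (modn_small (m := r + t - n)); last by lia.
have -> : r + t - n + n - r = t by lia.
by rewrite modn_small.
Qed.

Lemma dmod (N i j : nat) : i < N -> j < N ->
  (i + N - j) %% N = if j <= i then i - j else i + N - j.
Proof.
move=> iN jN; case: leqP => H.
  have -> : i + N - j = (i - j) + N by lia.
  by rewrite modnDr modn_small //; lia.
by rewrite modn_small //; lia.
Qed.

Lemma adj_sym k (i j : 'I_(3 * k - 1)) : andrasfai_adj i j = andrasfai_adj j i.
Proof.
rewrite /andrasfai_adj.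
have iN := ltn_ord i; have jN := ltn_ord j.
rewrite (dmod iN jN) (dmod jN iN).
have [->|ne] := eqVneq (val i) (val j); first by [].
move/eqP: ne => ne.
case: (leqP j i) => h1; case: (leqP i j) => h2; apply/idP/idP => /andP [? ?]; apply/andP; split; lia.
Qed.

Section Main.
Variables (k : nat) (T : finType) (e : rel T).
Hypothesis k1 : 1 <= k.
Hypothesis esym : symmetric e.
Hypothesis eirr : irreflexive e.
Hypothesis tf : triangle_free e.
Hypothesis mx : forall x y : T, x != y -> ~~ e x y -> exists z, e x z && e z y.
Hypothesis noC6 : ~ has_induced_C6 e.
Hypothesis noG : ~ has_andrasfai_subgraph k.+1 e.

Local Notation n := (3 * k - 1).
Lemma npos : 0 < n. Proof. lia. Qed.
Definition ord_of (x : nat) : 'I_n := Ordinal (ltn_pmod x npos).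
Definition h (f : 'I_n -> T) x := f (ord_of x).
Definition out (f : 'I_n -> T) x := forall j, f j != x.

Lemma ord_of_per x c : ord_of (x + c * n) = ord_of x.
Proof. by apply/val_inj; rewrite /= addnC modnMDl. Qed.

Lemma h_per f x c : h f (x + c * n) = h f x.
Proof. by rewrite /h ord_of_per. Qed.

Lemma ord_of_val (j : 'I_n) : ord_of j = j.
Proof. by apply/val_inj; rewrite /= modn_small. Qed.

Lemma rep u (j : 'I_n) : exists2 t, t < n & j = ord_of (u + t).
Proof.
have rl : u %% n < n := ltn_pmod u npos.
have jl := ltn_ord j.
have E : u = u %/ n * n + u %% n := divn_eq u n.
move: rl E; generalize (u %% n) => r rl E.
exists (if r <= j then j - r else j + n - r).
  case: (leqP r j) => ?; lia.
apply/val_inj => /=; rewrite {1}E -addnA modnMDl.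
case: (leqP r j) => ?.
  by rewrite (_ : r + (j - r) = j) ?modn_small //; lia.
by rewrite (_ : r + (j + n - r) = j + n) ?modnDr ?modn_small //; lia.
Qed.

Lemma adj_off u t : t < n ->
  andrasfai_adj (ord_of (u + t)) (ord_of u) = (k <= t) && (t <= 2 * k - 1).
Proof. by move=> tn; rewrite /andrasfai_adj /= modsub_lem // npos. Qed.

Lemma tri a b c : e a b -> e b c -> e a c -> False.
Proof. by move=> ab bc ac; apply: (tf (x:=a) (y:=b) (z:=c)); rewrite ab bc esym ac. Qed.

Lemma c6 v0 v1 v2 v3 v4 v5 :
  e v0 v1 -> e v1 v2 -> e v2 v3 -> e v3 v4 -> e v4 v5 -> e v5 v0 ->
  ~~ e v0 v2 -> ~~ e v0 v3 -> ~~ e v0 v4 -> ~~ e v1 v3 -> ~~ e v1 v4 ->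
  ~~ e v1 v5 -> ~~ e v2 v4 -> ~~ e v2 v5 -> ~~ e v3 v5 -> False.
Proof.
move=> *; apply: noC6.
pose c (i : 'I_6) := nth v0 [:: v0; v1; v2; v3; v4; v5] i.
have adj : forall a b, e (c a) (c b) = c6_adj a b.
  move=> a b; case: a b => [[|[|[|[|[|[|//]]]]]] ?] [[|[|[|[|[|[|//]]]]]] ?];
  rewrite /c /=; set b := c6_adj _ _; vm_compute in b; rewrite /b;
  first [ by rewrite eirr | done | by rewrite esym | by apply/negbTE
        | by rewrite esym; apply/negbTE ].
exists c; split => // a b Hab; apply: c6_inj => w.
by rewrite -!adj Hab.
Qed.

Lemma adjH f (emb : andrasfai_embedding k e f) u d :
  k <= d -> d <= 2 * k - 1 -> e (h f (u + d)) (h f u).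
Proof.
move=> d1 d2; case: emb => _ E; apply: E; rewrite adj_off; last by lia.
by apply/andP.
Qed.

Lemma adjQ f (emb : andrasfai_embedding k e f) u v d c1 c2 :
  k <= d -> d <= 2 * k - 1 -> v + c1 * n = u + d + c2 * n -> e (h f u) (h f v).
Proof.
move=> d1 d2 E; rewrite -(h_per f v c1) E h_per esym; exact: adjH.
Qed.

Lemma neQ f (emb : andrasfai_embedding k e f) u v d c1 c2 :
  1 <= d -> d <= k - 1 -> v + c1 * n = u + d + c2 * n -> ~~ e (h f u) (h f v).
Proof.
move=> d1 d2 E; rewrite -(h_per f v c1) E h_per; apply/negP => A.
have B : e (h f (u + d)) (h f (u + d + k)) by rewrite esym; apply: adjH => //; lia.
have C : e (h f u) (h f (u + d + k)).
  by rewrite -addnA esym; apply: adjH => //; lia.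
exact: (tri A B C).
Qed.

Lemma hinj f (emb : andrasfai_embedding k e f) u o o' :
  o < n -> o' < n -> h f (u + o) = h f (u + o') -> o = o'.
Proof.
case: emb => inj _ on o'n /inj /(congr1 val) /= /eqP.
by rewrite eqn_modDl !modn_small // => /eqP.
Qed.

Lemma repl f i z : andrasfai_embedding k e f -> out f z ->
  (forall j, andrasfai_adj i j -> e z (f j)) ->
  andrasfai_embedding k e (fun j => if j == i then z else f j).
Proof.
case=> inj E zo Z; split.
  move=> j j'; case: eqP => [->|ne]; case: eqP => [->|ne'] //.
  - by move=> zj; move: (zo j'); rewrite zj eqxx.
  - by move=> zj; move: (zo j); rewrite zj eqxx.
  - exact: inj.
move=> j j'; case: eqP => [->|ne]; case: eqP => [->|ne'].
- rewrite /andrasfai_adj addKn modnn => /andP [A _]; lia.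
- exact: Z.
- by rewrite adj_sym => /Z; rewrite esym.
- exact: E.
Qed.

Definition Int f x a l := forall t, t < n -> e x (h f (a + t)) = (t < l).

Ltac cl := repeat match goal with
  | H : is_true (e _ _) |- _ => clear H
  | H : is_true (~~ e _ _) |- _ => clear H
  | H : Int _ _ _ _ |- _ => clear H
  | H : out _ _ |- _ => clear H
  | H : andrasfai_embedding _ _ _ |- _ => clear H
  end.
Ltac Adj emb D C1 C2 :=
  first [ (apply: (adjQ emb (d:=D) (c1:=C1) (c2:=C2)); cl; lia)
        | (rewrite esym; apply: (adjQ emb (d:=D) (c1:=C1) (c2:=C2)); cl; lia) ].
Ltac Nad emb D C1 C2 :=
  first [ (apply: (neQ emb (d:=D) (c1:=C1) (c2:=C2)); cl; lia)
        | (rewrite esym; apply: (neQ emb (d:=D) (c1:=C1) (c2:=C2)); cl; lia) ].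


Lemma IntT f x a l t : Int f x a l -> t < l -> t < n -> e x (h f (a + t)).
Proof. by move=> I ??; rewrite I. Qed.
Lemma IntF f x a l t : Int f x a l -> l <= t -> t < n -> ~~ e x (h f (a + t)).
Proof. by move=> I ??; rewrite I // -leqNgt. Qed.

Lemma ext_right f (emb : andrasfai_embedding k e f) x a l z :
  Int f x a l -> 1 <= l -> l <= k - 1 -> e x z -> e z (h f (a + (k - 1))) ->
  forall b, b + 2 <= k -> e z (h f (a + (k + b))).
Proof.
move=> I l1 l2 xz zj b bk; apply/idPn => Hn.
have I0 : e x (h f a) by rewrite -[a]addn0; apply: (IntT I); lia.
have E34 : e (h f (a + (2 * k + b))) (h f (a + (k - 1))) by Adj emb (k + 1 + b) 0 0.
apply: (c6 (v0:=x) (v1:=h f a) (v2:=h f (a+(k+b))) (v3:=h f (a+(2*k+b)))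
          (v4:=h f (a+(k-1))) (v5:=z)).
- exact: I0.
- Adj emb (k + b) 0 0.
- Adj emb k 0 0.
- exact: E34.
- by rewrite esym.
- by rewrite esym.
- apply: (IntF I); lia.
- apply: (IntF I); lia.
- apply: (IntF I); lia.
- Nad emb (k - 1 - b) 1 0.
- Nad emb (k - 1) 0 0.
- by apply/negP => H; exact: tri I0 H xz.
- Nad emb (b + 1) 0 0.
- by rewrite esym.
- by apply/negP => H; apply: (tri E34 _ H); rewrite esym.
Qed.

Lemma ext_left f (emb : andrasfai_embedding k e f) x a z :
  Int f x a (k - 1) -> e x z -> e z (h f (a + (3 * k - 2))) ->
  forall g, g + 2 <= k -> e z (h f (a + (2 * k - 1 + g))).
Proof.
move=> I xz zj g gk; apply/idPn => Hn.
have I1 : e x (h f (a + (k - 2))) by apply: (IntT I); lia.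
have E34 : e (h f (a + (k - 1 + g))) (h f (a + (3 * k - 2))) by Adj emb (2 * k - 1 - g) 0 0.
apply: (c6 (v0:=x) (v1:=h f (a + (k - 2))) (v2:=h f (a+(2 * k - 1 + g)))
          (v3:=h f (a+(k - 1 + g))) (v4:=h f (a+(3 * k - 2))) (v5:=z)).
- exact: I1.
- Adj emb (k + 1 + g) 0 0.
- Adj emb k 0 0.
- exact: E34.
- by rewrite esym.
- by rewrite esym.
- apply: (IntF I); lia.
- apply: (IntF I); lia.
- apply: (IntF I); lia.
- Nad emb (g + 1) 0 0.
- Nad emb (k - 1) 1 0.
- by apply/negP => H; exact: tri I1 H xz.
- Nad emb (k - 1 - g) 0 0.
- by rewrite esym.
- by apply/negP => H; apply: (tri E34 _ H); rewrite esym.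
Qed.

Lemma gap f (emb : andrasfai_embedding k e f) x a g m : out f x ->
  0 < g -> g < m -> m <= k - 1 -> e x (h f a) -> e x (h f (a + m)) ->
  ~~ e x (h f (a + g)) -> False.
Proof.
move=> xo g0 gm mk x0 xm xg.
have [z /andP [xz zg]] : exists z, e x z && e z (h f (a + g)).
  by apply: mx => //; rewrite eq_sym; apply: xo.
have C1 : e z (h f (a + (k + g - 1))).
  apply/idPn => Hn.
  have E12 : e (h f a) (h f (a + (k + g - 1))) by Adj emb (k + g - 1) 0 0.
  have E34 : e (h f (a + (2 * k + g - 1))) (h f (a + g)) by Adj emb (2 * k - 1) 0 0.
  have Em3 : e (h f (a + m)) (h f (a + (2 * k + g - 1))) by Adj emb (2 * k + g - 1 - m) 0 0.
  apply: (c6 (v0:=x) (v1:=h f a) (v2:=h f (a+(k + g - 1)))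
          (v3:=h f (a+(2 * k + g - 1))) (v4:=h f (a+g)) (v5:=z)).
  - exact: x0.
  - exact: E12.
  - Adj emb k 0 0.
  - exact: E34.
  - by rewrite esym.
  - by rewrite esym.
  - by apply/negP => H; exact: tri x0 E12 H.
  - by apply/negP => H; exact: tri xm Em3 H.
  - exact: xg.
  - Nad emb (k - g) 1 0.
  - Nad emb g 0 0.
  - by apply/negP => H; exact: tri x0 H xz.
  - Nad emb (k - 1) 0 0.
  - by rewrite esym.
  - by apply/negP => H; apply: (tri E34 _ H); rewrite esym.
have C2 : e z (h f (a + (2 * k + g))).
  apply/idPn => Hn.
  have E12 : e (h f (a + m)) (h f (a + (2 * k + g))) by Adj emb (2 * k + g - m) 0 0.
  have E34 : e (h f (a + (k + g))) (h f (a + g)) by Adj emb k 0 0.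
  have E03 : e (h f a) (h f (a + (k + g))) by Adj emb (k + g) 0 0.
  apply: (c6 (v0:=x) (v1:=h f (a + m)) (v2:=h f (a+(2 * k + g)))
          (v3:=h f (a+(k + g))) (v4:=h f (a+g)) (v5:=z)).
  - exact: xm.
  - exact: E12.
  - Adj emb k 0 0.
  - exact: E34.
  - by rewrite esym.
  - by rewrite esym.
  - by apply/negP => H; exact: tri xm E12 H.
  - by apply/negP => H; exact: tri x0 E03 H.
  - exact: xg.
  - Nad emb (k + g - m) 0 0.
  - Nad emb (m - g) 0 0.
  - by apply/negP => H; exact: tri xm H xz.
  - Nad emb (k - 1) 1 0.
  - by rewrite esym.
  - by apply/negP => H; apply: (tri E34 _ H); rewrite esym.
have E : e (h f (a + (k + g - 1))) (h f (a + (2 * k + g))) by Adj emb (k + 1) 0 0.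
exact: tri C1 E C2.
Qed.

Definition off p := if p <= k then p + k - 2 else if p <= 2 * k + 1 then p + k - 3
  else p - 2 * k - 3.
Definition gf f x z z' a p :=
  if p == 0 then z' else if p == k.+1 then x else if p == 2 * k + 2 then z
  else h f (a + off p).

Lemma off1 p : p <= k -> off p = p + k - 2.
Proof. by rewrite /off => ->. Qed.
Lemma off2 p : k < p -> p <= 2 * k + 1 -> off p = p + k - 3.
Proof. by rewrite /off => H ->; rewrite ifN // -ltnNge. Qed.
Lemma off3 p : 2 * k + 1 < p -> off p = p - 2 * k - 3.
Proof. rewrite /off => H; rewrite ifN ?ifN //; rewrite -ltnNge //; lia. Qed.

Lemma gf0 f x z z' a : gf f x z z' a 0 = z'.
Proof. by []. Qed.
Lemma gfx f x z z' a : gf f x z z' a k.+1 = x.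
Proof. by rewrite /gf eqxx. Qed.
Lemma gfz f x z z' a : gf f x z z' a (2 * k + 2) = z.
Proof. rewrite /gf; case: eqP => [?|_]; first lia; case: eqP => [?|_]; first lia; by rewrite eqxx. Qed.
Lemma gfH f x z z' a p : p != 0 -> p != k.+1 -> p != 2 * k + 2 ->
  gf f x z z' a p = h f (a + off p).
Proof. by move=> *; rewrite /gf !ifN. Qed.

Lemma gcore f (emb : andrasfai_embedding k e f) x z z' a :
  Int f x a (k - 1) -> e x z -> e x z' ->
  (forall o, k - 1 <= o -> o <= 2 * k - 2 -> e z (h f (a + o))) ->
  (forall o, 2 * k - 1 <= o -> o <= 3 * k - 2 -> e z' (h f (a + o))) ->
  forall p p', p' < p -> p < 3 * k + 2 -> k + 1 <= p - p' -> p - p' <= 2 * k + 1 ->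
  e (gf f x z z' a p) (gf f x z z' a p').
Proof.
move=> I xz xz' Zr Zl p p' lt pN d1 d2.
have [E|p'0] := eqVneq p' 0.
  subst p'; rewrite gf0; have [E|px] := eqVneq p k.+1; first by subst p; rewrite gfx.
  have p0 : p != 0 by apply/eqP; lia.
  have pz : p != 2 * k + 2 by apply/eqP; lia.
  rewrite gfH // off2; try lia.
  by rewrite esym; apply: Zl; lia.
have [E|p'x] := eqVneq p' k.+1.
  subst p'; rewrite gfx; have [E|pz] := eqVneq p (2 * k + 2).
    by subst p; rewrite gfz esym.
  have p0 : p != 0 by apply/eqP; lia.
  have px : p != k.+1 by apply/eqP; lia.
  rewrite gfH // off3; try lia.
  by rewrite esym; apply: (IntT I); lia.
have [E|p'z] := eqVneq p' (2 * k + 2); first lia.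
rewrite (gfH _ _ _ _ _ p'0 p'x p'z).
have p0 : p != 0 by apply/eqP; lia.
have px : p != k.+1 by apply/eqP; lia.
have [Hp'|Hp'] := leqP p' k.
  rewrite off1 //.
  have [E|pz] := eqVneq p (2 * k + 2).
    by subst p; rewrite gfz; apply: Zr; lia.
  rewrite gfH //; have [Hp|Hp] := leqP p (2 * k + 1).
    rewrite off2 //; try lia.
    Adj emb (p - p' - 1) 0 0.
  rewrite off3 //.
  Adj emb (p - p' - 2) 1 0.
have pz : p != 2 * k + 2 by apply/eqP; lia.
rewrite off2 //; try lia.
rewrite gfH // off3; try lia.
Adj emb (p - p' - 1) 1 0.
Qed.

Lemma gcls f x z z' a q : q < 3 * k + 2 ->
  [\/ q = 0 /\ gf f x z z' a q = z', q = k.+1 /\ gf f x z z' a q = x,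
      q = 2 * k + 2 /\ gf f x z z' a q = z |
      [/\ q != 0, q != k.+1, q != 2 * k + 2, gf f x z z' a q = h f (a + off q) & off q < n]].
Proof.
move=> qN.
have [E|q0] := eqVneq q 0; first by subst q; apply: Or41.
have [E|q1] := eqVneq q k.+1; first by subst q; apply: Or42; rewrite gfx.
have [E|q2] := eqVneq q (2 * k + 2); first by subst q; apply: Or43; rewrite gfz.
apply: Or44; split => //; first by rewrite gfH.
move/eqP: q0 => q0; move/eqP: q1 => q1; move/eqP: q2 => q2.
rewrite /off; case: (leqP q k) => ? /=; [lia|]; case: (leqP q (2*k+1)) => ? /=; lia.
Qed.

Lemma ginj f (emb : andrasfai_embedding k e f) x z z' a :
  out f x -> out f z -> out f z' -> x != z -> x != z' -> z != z' ->
  forall p p', p < 3 * k + 2 -> p' < 3 * k + 2 ->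
  gf f x z z' a p = gf f x z z' a p' -> p = p'.
Proof.
move=> xo zo z'o nxz nxz' nzz' p p' pN p'N E.
case: (@gcls f x z z' a p pN) => [[Hp Gp]|[Hp Gp]|[Hp Gp]|[/eqP p0 /eqP p1 /eqP p2 Gp Op]];
case: (@gcls f x z z' a p' p'N) => [[Hq Gq]|[Hq Gq]|[Hq Gq]|[/eqP q0 /eqP q1 /eqP q2 Gq Oq]];
rewrite Gp Gq /h in E; try by rewrite Hp Hq.
all: try by move: nxz nxz' nzz'; rewrite E eqxx.
all: try by move: nxz nxz' nzz'; rewrite -E eqxx.
all: try by move: (xo (ord_of (a + off p'))) (zo (ord_of (a + off p'))) (z'o (ord_of (a + off p'))); rewrite E eqxx.
all: try by move: (xo (ord_of (a + off p))) (zo (ord_of (a + off p))) (z'o (ord_of (a + off p))); rewrite E eqxx.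
have := hinj emb Op Oq E.
rewrite /off; case: (leqP p k) => ? /=; case: (leqP p (2*k+1)) => ? /=;
  case: (leqP p' k) => ? /=; case: (leqP p' (2*k+1)) => ? /=; lia.
Qed.

Lemma base f (emb : andrasfai_embedding k e f) x a :
  out f x -> Int f x a (k - 1) -> False.
Proof.
move=> xo I.
have [z /andP [xz zr]] : exists z, e x z && e z (h f (a + (k - 1))).
  by apply: mx; [rewrite eq_sym; apply: xo | apply: (IntF I); lia].
have [z' /andP [xz' zl]] : exists z, e x z && e z (h f (a + (3 * k - 2))).
  by apply: mx; [rewrite eq_sym; apply: xo | apply: (IntF I); lia].
have Zr : forall o, k - 1 <= o -> o <= 2 * k - 2 -> e z (h f (a + o)).
  move=> o o1 o2; have [E|ne] := eqVneq o (k - 1); first by subst o.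
  rewrite (_ : o = k + (o - k)); last by move/eqP: ne; lia.
  apply: (ext_right emb I) => //; move/eqP: ne; lia.
have Zl : forall o, 2 * k - 1 <= o -> o <= 3 * k - 2 -> e z' (h f (a + o)).
  move=> o o1 o2; have [E|ne] := eqVneq o (3 * k - 2); first by subst o.
  rewrite (_ : o = 2 * k - 1 + (o - (2 * k - 1))); last by move/eqP: ne; lia.
  apply: (ext_left emb I) => //; move/eqP: ne; lia.
have zo : out f z.
  move=> j; apply/eqP => E; have [t tn jt] := rep a j.
  move: xz zr; rewrite -E jt -/(h f (a + t)) => xt.
  have tl : t < k - 1 by move: xt; rewrite I.
  apply/negP; Nad emb (k - 1 - t) 0 0.
have z'o : out f z'.
  move=> j; apply/eqP => E; have [t tn jt] := rep a j.
  move: xz' zl; rewrite -E jt -/(h f (a + t)) => xt.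
  have tl : t < k - 1 by move: xt; rewrite I.
  apply/negP; Nad emb (t + 1) 1 0.
have nxz : x != z by apply/eqP => E; subst; rewrite eirr in xz.
have nxz' : x != z' by apply/eqP => E; subst; rewrite eirr in xz'.
have nzz' : z != z'.
  apply/eqP => E; subst z'.
  have A : e (h f (a + (k - 1))) (h f (a + (2 * k - 1))) by Adj emb k 0 0.
  have B : e z (h f (a + (2 * k - 1))) by apply: Zl; lia.
  exact: tri zr A B.
apply: noG; exists (fun p : 'I_(3 * k.+1 - 1) => gf f x z z' a p); split.
  move=> p p' /(ginj emb xo zo z'o nxz nxz' nzz') E; apply/val_inj; apply: E.
    by have := ltn_ord p; lia.
  by have := ltn_ord p'; lia.
move=> p p'; have pN := ltn_ord p; have p'N := ltn_ord p'.
rewrite /andrasfai_adj dmod //.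
case: (leqP p' p) => H /andP [d1 d2].
  have [E|ne] := eqVneq (val p) (val p'); first by rewrite E subnn in d1.
  move/eqP: ne => ne.
  apply: (gcore emb I xz xz' Zr Zl); lia.
rewrite esym; apply: (gcore emb I xz xz' Zr Zl); lia.
Qed.

Lemma IC d : forall f (emb : andrasfai_embedding k e f) x a, out f x ->
  Int f x a (k - 1 - d) -> (d == 0) || (d < k - 1) -> False.
Proof.
elim: d => [|d IH] f emb x a xo I hd.
  by have HH := @base f emb x a xo; move: I; rewrite subn0.
have dk : d.+1 < k - 1 by move: hd; rewrite /=.
have [z /andP [xz zr]] : exists z, e x z && e z (h f (a + (k - 1))).
  by apply: mx; [rewrite eq_sym; apply: xo | apply: (IntF I); lia].
have Zr : forall o, k - 1 <= o -> o <= 2 * k - 2 -> e z (h f (a + o)).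
  move=> o o1 o2; have [E|ne] := eqVneq o (k - 1); first by subst o.
  rewrite (_ : o = k + (o - k)); last by move/eqP: ne; lia.
  apply: (ext_right emb I) => //; move/eqP: ne; lia.
have zo : out f z.
  move=> j; apply/eqP => E; have [t tn jt] := rep a j.
  move: xz zr; rewrite -E jt -/(h f (a + t)) => xt.
  have tl : t < k - 1 - d.+1 by move: xt; rewrite I.
  apply/negP; Nad emb (k - 1 - t) 0 0.
pose a' := a + (3 * k - 2).
pose i := ord_of a'.
have Hadj : forall j, andrasfai_adj i j -> e z (f j).
  move=> j; have [t tn jt] := rep a' j.
  rewrite jt adj_sym adj_off // => /andP [t1 t2].
  change (e z (h f (a' + t))).
  rewrite (_ : a' + t = (a + (t - 1)) + 1 * n); last by rewrite /a'; lia.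
  rewrite h_per; apply: Zr; lia.
have emb' := repl emb zo Hadj.
apply: (IH _ emb' x a') => //.
- move=> j /=; case: ifP => _; last exact: xo.
  by apply/eqP => E; subst; rewrite eirr in xz.
- move=> t tn; rewrite /h.
  have [E|ne] := eqVneq t 0.
    subst t; rewrite addn0 eqxx xz; lia.
  have -> : (ord_of (a' + t) == i) = false.
    apply/negbTE/eqP => /(congr1 val) /= /eqP.
    rewrite -{2}[a']addn0 eqn_modDl mod0n modn_small // => /eqP; move/eqP: ne; lia.
  rewrite (_ : a' + t = (a + (t - 1)) + 1 * n); last by rewrite /a'; move/eqP: ne; lia.
  rewrite ord_of_per -/(h f (a + (t - 1))) I; last by lia.
  move/eqP: ne; lia.
- apply/orP; right; lia.
Qed.

Lemma twin_full f (emb : andrasfai_embedding k e f) x a :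
  Int f x a k -> H_twin e [set f j | j in 'I_n] (f (ord_of (a + (2 * k - 1)))) x.
Proof.
move=> I v /imsetP [j _ ->]; have [t tn jt] := rep a j.
rewrite jt -/(h f (a + t)) -/(h f (a + (2 * k - 1))) I //.
case: (ltnP t k) => H.
  Adj emb (2 * k - 1 - t) 0 0.
apply/negbTE; case: (ltngtP t (2 * k - 1)) => H2.
- Nad emb (2 * k - 1 - t) 0 0.
- Nad emb (t - (2 * k - 1)) 0 0.
- by rewrite H2 eirr.
Qed.

Lemma nonempty f (emb : andrasfai_embedding k e f) x s : out f x -> e x (h f s) ->
  exists i, H_twin e [set f j | j in 'I_n] (f i) x.
Proof.
move=> xo xs.
pose b0 := s + 2 * k.
have Dist : forall o, o < n -> e x (h f (b0 + o)) -> o <= 2 * k - 2.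
  move=> o on xo'; rewrite leqNgt; apply/negP => H.
  have A : e (h f s) (h f (b0 + o)) by rewrite /b0; Adj emb (o + 1 - k) 0 1.
  exact: tri xs A xo'.
have P0 : exists o, (o < n) && e x (h f (b0 + o)).
  exists (k - 1); apply/andP; split; first lia.
  by rewrite (_ : b0 + (k - 1) = s + 1 * n) ?h_per //; rewrite /b0; lia.
case: (ex_minnP P0) => o0 /andP [o0n xo0] omin.
pose a := b0 + o0.
have Cont : forall t, t < n -> e x (h f (a + t)) -> t <= k - 1.
  move=> t tn xt.
  case: (ltnP (o0 + t) n) => H.
    have D : o0 + t <= 2 * k - 2 by apply: Dist => //; rewrite addnA.
    rewrite leqNgt; apply/negP => kt.
    have A : e (h f a) (h f (a + t)) by Adj emb t 0 0.
    exact: tri xo0 A xt.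
  have : o0 <= o0 + t - n.
    apply: omin; apply/andP; split; first lia.
    by rewrite -(h_per f _ 1) (_ : b0 + (o0 + t - n) + 1 * n = a + t) //; rewrite /a; lia.
  lia.
have Qk : (0 < k) && ~~ e x (h f (a + k)).
  apply/andP; split; first lia.
  apply/negP => xk; have kn : k < n by lia.
  have := Cont k kn xk; lia.
have Q0 : exists t, (0 < t) && ~~ e x (h f (a + t)) by exists k.
case: (ex_minnP Q0) => l /andP [l0 xl] lmin.
have lk : l <= k by apply: lmin.
have I : Int f x a l.
  move=> t tn; case: (ltnP t l) => H.
    have [E|ne] := eqVneq t 0; first by subst t; rewrite addn0.
    apply/idPn => nt; have := lmin t; rewrite nt andbT; move/eqP: ne; lia.
  apply/negbTE; have [E|ne] := eqVneq t l; first by subst t.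
  apply/negP => xt; have tk := Cont t tn xt.
  apply: (gap emb xo l0 _ tk xo0 xt xl); move/eqP: ne; lia.
have [E|ne] := eqVneq l k.
  rewrite E in I; exists (ord_of (a + (2 * k - 1))); exact (@twin_full f emb x a I).
exfalso; refine (@IC (k - 1 - l) f emb x a xo _ _).
  by rewrite (_ : k - 1 - (k - 1 - l) = l) //; move/eqP: ne; lia.
apply/orP; right; move/eqP: ne; lia.
Qed.

Lemma main_sec f (emb : andrasfai_embedding k e f) q :
  exists i : 'I_n, H_twin e [set f j | j in 'I_n] (f i) q.
Proof.
case: (pickP (fun j => f j == q)) => [j /eqP Hj | Hn].
  by exists j; move=> v _; rewrite Hj.
have qo : out f q by move=> j; rewrite Hn.
case: (pickP (fun j => e q (f j))) => [j qj | Hne].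
  by apply: (nonempty emb qo (s := j)); rewrite /h ord_of_val.
have [k1'|k2] := leqP k 1.
  exfalso; refine (@IC 0 f emb q 0 qo _ _) => //.
  move=> t tn; rewrite Hne; lia.
have [z /andP [qz zr]] : exists z, e q z && e z (h f 0).
  by apply: mx; [rewrite eq_sym; apply: qo | rewrite /h Hne].
have zo : out f z.
  by move=> j; apply/eqP => E; move: (Hne j); rewrite E qz.
have [i Ti] := nonempty emb zo zr.
have Hadj : forall j, andrasfai_adj i j -> e z (f j).
  move=> j Aij; rewrite -Ti; last by apply/imsetP; exists j.
  by case: emb => _ E; apply: E.
have emb' := repl emb zo Hadj.
exfalso; refine (@IC (k - 2) _ emb' q i _ _ _).
- move=> j /=; case: ifP => _; last exact: qo.
  by apply/eqP => E; subst; rewrite eirr in qz.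
- move=> t tn; rewrite /h (_ : k - 1 - (k - 2) = 1); last by lia.
  have [E|ne] := eqVneq t 0.
    by subst t; rewrite addn0 ord_of_val eqxx qz.
  have -> : (ord_of (i + t) == i) = false.
    apply/negbTE/eqP => /(congr1 val) /=.
    rewrite -{2}(modn_small (ltn_ord i)) => /eqP.
    rewrite -{2}[nat_of_ord i]addn0 eqn_modDl mod0n modn_small // => /eqP; move/eqP: ne; lia.
  rewrite Hne; move/eqP: ne; lia.
- apply/orP; right; lia.
Qed.

End Main.

Theorem lemma3p4 (k : nat) (T : finType) (e : rel T) :
  1 <= k ->
  classA e ->
  ~ has_andrasfai_subgraph k.+1 e ->
  forall f : 'I_(3 * k - 1) -> T,
    andrasfai_embedding k e f ->
    forall q : T, exists i : 'I_(3 * k - 1),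
      H_twin e [set f j | j in 'I_(3 * k - 1)] (f i) q.
Proof.
move=> k1 [[esym eirr] _ [tf mx] noC6] noG f emb q.
exact: (main_sec k1 esym eirr tf mx noC6 noG emb q).
Qed.
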